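(* Let $G=\mathbb{Z}_2\times\mathbb{Z}_4$ and let $\theta_1,\theta_2$ be normalised orthomorphisms of $G$ with $|A_{44}\cap A'_{44}|=2$. Then $\theta_1$ and $\theta_2$ are not orthogonal.
   Context: $G$ is written multiplicatively with identity $e$; $o(g)$ is the order of $g$. A normalised orthomorphism of $G$ is a bijection $\theta\colon G\to G$ with $\theta(e)=e$ such that $x\mapsto x^{-1}\theta(x)$ is a bijection of $G$. Two orthomorphisms are orthogonal if $x\mapsto\theta_1(x)^{-1}\theta_2(x)$ is a bijection of $G$. $A_{44}=\{x: o(x)=4, o(\theta_1(x))=4\}$ and $A'_{44}=\{x: o(x)=4, o(\theta_2(x))=4\}$. *)

(* Defs.v *)
From mathcomp Require Import all_boot all_fingroup zmodp.
Set Implicit Arguments. Unset Strict Implicit. Unset Printing Implicit Defensive.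
Local Open Scope group_scope.

(* G = Z_2 x Z_4, as the external direct product of the (additive, cyclic)
   groups 'Z_2 and 'Z_4, with its canonical finGroupType structure
   (gproduct.v); group law written multiplicatively, identity 1. *)
Definition G : finGroupType := ('Z_2 * 'Z_4)%type.

Definition normalised_orthomorphism (gT : finGroupType) (th : gT -> gT) : Prop :=
  [/\ bijective th, th 1 = 1 & bijective (fun x => x^-1 * th x)].

Definition orthogonal_orth (gT : finGroupType) (th1 th2 : gT -> gT) : Prop :=
  bijective (fun x => (th1 x)^-1 * th2 x).

Definition A44 (gT : finGroupType) (th : gT -> gT) : {set gT} :=
  [set x | (#[x] == 4)%N && (#[th x] == 4)%N].

(* Main.v *)
Require Import Defs.
From mathcomp Require Import all_boot all_fingroup zmodp.
From mathcomp Require Import cyclic zify.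
Local Open Scope group_scope.

Definition eG : seq G :=
  [seq ((inZp i : 'Z_2), (inZp j : 'Z_4)) | i <- iota 0 2, j <- iota 0 4].
Arguments eG : simpl never.
Definition gm (x y : G) : G := x * y.
Definition gi (x : G) : G := x^-1.
Definition o4 (x : G) : bool := (x ^+ 4 == 1) && (x ^+ 2 != 1).

Lemma memeG x : x \in eG.
Proof.
case: x => [[a Ha] [b Hb]].
by case: a Ha => [|[|[]]] //= Ha; case: b Hb => [|[|[|[|[]]]]] //= Hb;
  apply/mapP; eexists; (try by rewrite mem_iota); apply/pair_eqP/andP; split; apply/eqP/val_inj.
Qed.

Lemma uniq_eG : uniq eG. Proof. by vm_compute. Qed.
Lemma size_eG : size eG = 8%N. Proof. by []. Qed.

Lemma o4E (x : G) : (#[x] == 4)%N = o4 x.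
Proof.
rewrite /o4 -!order_dvdn; have := order_gt0 x.
case: #[x] => [|[|[|[|[|n]]]]] // _.
Qed.

Definition okp (s : seq G) : bool :=
  uniq s && uniq [seq gm (gi (nth 1 eG i)) (nth 1 s i) | i <- iota 0 (size s)].

Fixpoint cand (n : nat) : seq (seq G) :=
  match n with
  | 0 => [:: [::]]
  | n'.+1 => flatten (map (fun s => [seq rcons s y | y <- eG & okp (rcons s y)]) (cand n'))
  end.

Lemma cand_complete s : (forall k, okp (take k s)) -> s \in cand (size s).
Proof.
elim/last_ind: s => [|s y IH] H; first by rewrite inE.
rewrite size_rcons; apply/flatten_mapP; exists s.
  apply: IH => k; case: (leqP k (size s)) => hk.
    by have := H k; rewrite -cats1 takel_cat.
  by have := H (size s); rewrite -cats1 take_size_cat // take_oversize // ltnW.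
apply: map_f; rewrite mem_filter memeG andbT.

by have := H (size (rcons s y)); rewrite take_size.
Qed.

Lemma okp_th (th : G -> G) : bijective th -> bijective (fun x => x^-1 * th x) ->
  forall k, okp (take k (map th eG)).
Proof.
move=> /bij_inj i1 /bij_inj i2 k; apply/andP; split.
  by apply: take_uniq; rewrite map_inj_uniq // uniq_eG.
rewrite size_take_min size_map size_eG.
have -> : [seq gm (gi (nth 1 eG i)) (nth 1 (take k [seq th i | i <- eG]) i)
          | i <- iota 0 (minn k 8)]
        = take k [seq (fun x => x^-1 * th x) (nth 1 eG i) | i <- iota 0 8].
  rewrite -[in RHS]map_take take_iota; apply/eq_in_map => i; rewrite mem_iota add0n => hi.
  have hk : (i < k)%N by lia.
  have h8 : (i < 8)%N by lia.
  by rewrite nth_take // (nth_map 1) // size_eG.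
apply: take_uniq.
have -> : [seq (eG`_i)^-1 * th eG`_i | i <- iota 0 8]
  = [seq x^-1 * th x | x <- map (nth 1 eG) (iota 0 8)] by rewrite -map_comp.
have -> : [seq nth 1 eG i | i <- iota 0 8] = eG by rewrite -size_eG -/(mkseq _ _) mkseq_nth.
by rewrite map_inj_uniq // uniq_eG.
Qed.

Definition F (s : seq G) (x : G) : G := nth 1 s (index x eG).
Definition L : seq (seq G) := [seq s <- cand 8 | nth 1 s 0 == 1].
Definition check : bool :=
  all (fun s1 => all (fun s2 =>
    (count (fun x => o4 x && o4 (F s1 x) && o4 (F s2 x)) eG == 2)
      ==> ~~ uniq [seq gm (gi (F s1 x)) (F s2 x) | x <- eG]) L) L.
Lemma checkT : check. Proof. Time vm_compute. reflexivity. Qed.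

Lemma FE (th : G -> G) x : F (map th eG) x = th x.
Proof. by rewrite /F (nth_map 1) ?index_mem ?memeG // nth_index // memeG. Qed.

Lemma inL (th : G -> G) : normalised_orthomorphism th -> map th eG \in L.
Proof.
case=> b1 h1 b2; rewrite mem_filter; apply/andP; split.
  rewrite (nth_map 1) ?size_eG //.
  have -> : nth 1 eG 0 = 1 by apply/eqP; vm_compute.
  by rewrite h1.
have := @cand_complete _ (@okp_th th b1 b2); by rewrite size_map size_eG.
Qed.

Lemma cardA (th1 th2 : G -> G) :
  #|A44 th1 :&: A44 th2| = count (fun x => o4 x && o4 (th1 x) && o4 (th2 x)) eG.
Proof.
rewrite -size_filter -(card_uniqP _); last by rewrite filter_uniq // uniq_eG.
apply: eq_card => x; rewrite !inE mem_filter memeG andbT !o4E.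
by case: (o4 x); rewrite ?andbT ?andbF.
Qed.

Theorem proposition2 (th1 th2 : G -> G) :
  normalised_orthomorphism th1 ->
  normalised_orthomorphism th2 ->
  #|A44 th1 :&: A44 th2| = 2 ->
  ~ orthogonal_orth th1 th2.
Proof.
move=> n1 n2 hc /bij_inj hinj.
have := checkT; move/allP/(_ _ (@inL th1 n1))/allP/(_ _ (@inL th2 n2)).
have -> : count (fun x => o4 x && o4 (F (map th1 eG) x) && o4 (F (map th2 eG) x)) eG = 2%N.
  by rewrite -hc cardA; apply: eq_count => x; rewrite !FE.
move/implyP/(_ (eqxx _))/negP; apply.
rewrite map_inj_in_uniq ?uniq_eG //.
move=> x y _ _; rewrite /gm /gi !FE; exact: hinj.
Qed.
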